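(* Let $P,Q\in\mathbb P_d$ and $t\in[0,1]$, and put $R_1:=\big[\gamma^{\mathrm{BW}}_{P^{-1}Q}(t)\big]^{-1}$ and $R_2:=\big[\gamma^{\mathrm{BW}}_{Q^{-1}P}(t)\big]^{-1}$. Then $\operatorname{F}_{R_1}(P,Q)=\operatorname{F}_{R_2}(P,Q)$.
   Context: $\mathbb P_d$ is the set of $d\times d$ complex positive definite matrices; $A\#B:=A^{1/2}(A^{-1/2}BA^{-1/2})^{1/2}A^{1/2}$. The Bures–Wasserstein geodesic between $A,B\in\mathbb P_d$ is $\gamma^{\mathrm{BW}}_{AB}(t):=[(1-t)\mathbb I+t\,A^{-1}\#B]\,A\,[(1-t)\mathbb I+t\,A^{-1}\#B]$, $t\in[0,1]$. The generalized fidelity is $\operatorname{F}_R(P,Q):=\operatorname{Tr}\big[\sqrt{R^{1/2}PR^{1/2}}\,R^{-1}\sqrt{R^{1/2}QR^{1/2}}\big]$. *)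

(* Defs.v *)
From HB Require Import structures.
From mathcomp Require Import all_boot all_order all_algebra.
From mathcomp Require Import complex.
From mathcomp Require Import reals.
From Stdlib Require Import ClassicalEpsilon.

Set Implicit Arguments.
Unset Strict Implicit.
Unset Printing Implicit Defensive.

Import Order.TTheory GRing.Theory Num.Theory.
Local Open Scope ring_scope.

Section MatrixMeans.
Variable C : numClosedFieldType.

Definition adjmx (n : nat) (A : 'M[C]_n) : 'M[C]_n := (map_mx Num.conj A)^T.

Definition posdefmx (n : nat) (A : 'M[C]_n) : Prop :=
  adjmx A = A /\
  forall v : 'rV[C]_n, v != 0 -> 0 < (v *m A *m (map_mx Num.conj v)^T) ord0 ord0.

Definition psdmx (n : nat) (A : 'M[C]_n) : Prop :=
  adjmx A = A /\
  forall v : 'rV[C]_n, 0 <= (v *m A *m (map_mx Num.conj v)^T) ord0 ord0.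

Definition sqrtmx (n : nat) (A : 'M[C]_n) : 'M[C]_n :=
  epsilon (inhabits 0) (fun S => psdmx S /\ S *m S = A).

Definition gmeanmx (n : nat) (A B : 'M[C]_n) : 'M[C]_n :=
  let sA := sqrtmx A in
  let isA := invmx sA in
  sA *m sqrtmx (isA *m B *m isA) *m sA.

Definition gammaBW (n : nat) (A B : 'M[C]_n) (t : C) : 'M[C]_n :=
  let M := (1 - t)%:M + t *: gmeanmx (invmx A) B in
  M *m A *m M.

Definition genfid (n : nat) (R P Q : 'M[C]_n) : C :=
  let sR := sqrtmx R in
  \tr (sqrtmx (sR *m P *m sR) *m invmx R *m sqrtmx (sR *m Q *m sR)).

End MatrixMeans.

(* Main.v *)
Require Import Defs.
From HB Require Import structures.
From mathcomp Require Import all_boot all_order all_algebra.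
From mathcomp Require Import complex.
From mathcomp Require Import reals.
From mathcomp Require Import spectral ring.
Set Implicit Arguments. Unset Strict Implicit. Unset Printing Implicit Defensive.
Import Order.TTheory GRing.Theory Num.Theory.
Local Open Scope ring_scope.

Section G.
Variable C : numClosedFieldType.

Definition adj m n (A : 'M[C]_(m,n)) : 'M[C]_(n,m) := (map_mx Num.conj A)^T.

Lemma adjmxE n (A : 'M[C]_n) : adjmx A = adj A. Proof. by []. Qed.

Lemma adjM m n p (A : 'M[C]_(m,n)) (B : 'M[C]_(n,p)) : adj (A *m B) = adj B *m adj A.
Proof. by rewrite /adj map_mxM trmx_mul. Qed.

Lemma adjK m n (A : 'M[C]_(m,n)) : adj (adj A) = A.
Proof. by apply/matrixP => i j; rewrite !mxE conjCK. Qed.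

Lemma adjD m n (A B : 'M[C]_(m,n)) : adj (A + B) = adj A + adj B.
Proof. by apply/matrixP => i j; rewrite !mxE rmorphD. Qed.

Lemma adjN m n (A : 'M[C]_(m,n)) : adj (- A) = - adj A.
Proof. by apply/matrixP => i j; rewrite !mxE rmorphN. Qed.

Lemma adjZ m n a (A : 'M[C]_(m,n)) : adj (a *: A) = a^* *: adj A.
Proof. by apply/matrixP => i j; rewrite !mxE rmorphM. Qed.

Lemma adj_scalar n a : adj (a%:M : 'M[C]_n) = a^*%:M.
Proof. by apply/matrixP => i j; rewrite !mxE eq_sym rmorphMn. Qed.

Lemma adj1 n : adj (1%:M : 'M[C]_n) = 1%:M.
Proof. by rewrite adj_scalar rmorph1. Qed.

Lemma adj_unit n (A : 'M[C]_n) : (adj A \in unitmx) = (A \in unitmx).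
Proof. by rewrite /adj unitmx_tr map_unitmx. Qed.

Lemma adjV n (A : 'M[C]_n) : adj (invmx A) = invmx (adj A).
Proof. by rewrite /adj map_invmx trmx_inv. Qed.

Definition qf n (A : 'M[C]_n) (v : 'rV[C]_n) : C := (v *m A *m adj v) 0 0.

Definition psd n (A : 'M[C]_n) := adj A = A /\ forall v, 0 <= qf A v.

Lemma psdmxE n (A : 'M[C]_n) : psdmx A <-> psd A. Proof. by []. Qed.

Lemma dot_ge0 n (w : 'rV[C]_n) : 0 <= (w *m adj w) 0 0.
Proof.
rewrite !mxE sumr_ge0 // => i _; rewrite !mxE mul_conjC_ge0 //.
Qed.

Lemma dot_eq0 n (w : 'rV[C]_n) : (w *m adj w) 0 0 = 0 -> w = 0.
Proof.
rewrite !mxE => /eqP; rewrite psumr_eq0 => [/allP H|i _]; last by rewrite !mxE mul_conjC_ge0.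
apply/rowP => i; rewrite mxE; have := H i (mem_index_enum _).
by rewrite !mxE mul_conjC_eq0 => /eqP.
Qed.

Lemma adjt m n (A : 'M[C]_(m,n)) : map_mx Num.conj (A^T) = adj A.
Proof. by rewrite /adj map_trmx. Qed.

Lemma qfE n (A : 'M[C]_n) v : qf A v = (v *m A *m adj v) 0 0. Proof. by []. Qed.

Lemma psd_congr n (A B : 'M[C]_n) : psd A -> psd (B *m A *m adj B).
Proof.
move=> [hA qA]; split; first by rewrite !adjM adjK hA mulmxA.
move=> v; have := qA (v *m B); rewrite /qf adjM !mulmxA //.
Qed.

Lemma qfD n (A B : 'M[C]_n) v : qf (A + B) v = qf A v + qf B v.
Proof. by rewrite /qf mulmxDr mulmxDl mxE. Qed.

Lemma qfZ n a (A : 'M[C]_n) v : qf (a *: A) v = a * qf A v.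
Proof. by rewrite /qf -scalemxAr -scalemxAl mxE. Qed.

Lemma psdD n (A B : 'M[C]_n) : psd A -> psd B -> psd (A + B).
Proof.
move=> [hA qA] [hB qB]; split; first by rewrite adjD hA hB.
by move=> v; rewrite qfD addr_ge0.
Qed.

Lemma psdZ n a (A : 'M[C]_n) : 0 <= a -> psd A -> psd (a *: A).
Proof.
move=> a0 [hA qA]; split; first by rewrite adjZ hA conj_Creal // ger0_real.
by move=> v; rewrite qfZ mulr_ge0.
Qed.

Lemma psd1 n : psd (1%:M : 'M[C]_n).
Proof. split; first exact: adj1. by move=> v; rewrite /qf mulmx1 dot_ge0. Qed.

Lemma psdV n (A : 'M[C]_n) : psd A -> A \in unitmx -> psd (invmx A).
Proof.
move=> pA uA; have -> : invmx A = invmx A *m A *m adj (invmx A).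
  by rewrite adjV pA.1 mulmxK.
exact: psd_congr.
Qed.

Lemma unitary_adj n (U : 'M[C]_n) : U \is unitarymx ->
  U *m adj U = 1%:M /\ adj U *m U = 1%:M.
Proof.
move=> uU; have h := invmx_unitary uU; rewrite adjt in h.
by rewrite -h mulmxV ?mulVmx ?unitarymx_unit.
Qed.

Lemma qf_diag n (e : 'rV[C]_n) v :
  qf (diag_mx e) v = \sum_j e 0 j * (v 0 j * (v 0 j)^*).
Proof.
rewrite /qf mul_mx_diag !mxE; apply: eq_bigr => j _; rewrite !mxE; ring.
Qed.

Lemma psd_diag n (e : 'rV[C]_n) : (forall j, 0 <= e 0 j) -> psd (diag_mx e).
Proof.
move=> he; split.
  apply/matrixP => i j; rewrite !mxE eq_sym.
  case: eqP => [->|_]; rewrite ?mulr0n ?mulr1n ?rmorph0 //.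
  exact/CrealP/ger0_real.
by move=> v; rewrite qf_diag sumr_ge0 // => j _; rewrite mulr_ge0 ?mul_conjC_ge0.
Qed.

Lemma qf_row n (A X : 'M[C]_n) j : qf A (row j X) = (X *m A *m adj X) j j.
Proof.
rewrite /qf !mxE; apply: eq_bigr => k _; rewrite !mxE; congr (_ * _).
by apply: eq_bigr => l _; rewrite !mxE.
Qed.

Lemma psd_sqrt_ex n (A : 'M[C]_n) : psd A -> exists S, psd S /\ S *m S = A.
Proof.
move=> pA.
have nA : A \is normalmx by apply/normalmxP; rewrite adjt pA.1.
have /orthomx_spectralP eA := nA.
set U := spectralmx A in eA; set d := spectral_diag A in eA.
have uU : U \is unitarymx by exact: spectral_unitarymx.
have [UU UU'] := unitary_adj uU.
have iU : invmx U = adj U by rewrite invmx_unitary // adjt.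
rewrite iU in eA.
have dE : diag_mx d = U *m A *m adj U.
  by rewrite eA !mulmxA UU mul1mx -!mulmxA UU mulmx1.
have d0 : forall j, 0 <= d 0 j.
  move=> j; have := (pA.2 (row j U)).
  rewrite qf_row.
  by rewrite -dE mxE eqxx mulr1n.
pose e := \row_j sqrtC (d 0 j).
exists (adj U *m diag_mx e *m U); split.
  rewrite -{2}(adjK U); apply: psd_congr; apply: psd_diag => j.
  by rewrite mxE sqrtC_ge0.
rewrite -!mulmxA [U *m _]mulmxA UU mul1mx (mulmxA (diag_mx e)) mulmx_diag eA mulmxA.
congr (_ *m diag_mx _ *m _); apply/rowP => j; rewrite !mxE.
by rewrite -expr2 sqrtCK.
Qed.


Lemma sqrtmx_spec n (A : 'M[C]_n) : psd A ->
  psd (sqrtmx A) /\ sqrtmx A *m sqrtmx A = A.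
Proof.
move=> pA; rewrite /sqrtmx; apply: (ClassicalEpsilon.epsilon_spec (inhabits 0)
   (fun S => psdmx S /\ S *m S = A)).
exact: psd_sqrt_ex.
Qed.

Lemma qf_eq0 n (A : 'M[C]_n) v : psd A -> qf A v = 0 -> v *m A = 0.
Proof.
move=> pA; have [[hS qS] SS] := sqrtmx_spec pA; set S := sqrtmx A in hS qS SS *.
rewrite /qf -SS !mulmxA -{2}hS -mulmxA -adjM => /dot_eq0 ->.
by rewrite mul0mx.
Qed.

Lemma scale00 a (X : 'M[C]_1) : (a *: X) 0 0 = a * X 0 0.
Proof. by rewrite mxE. Qed.

Lemma qfN n (A : 'M[C]_n) v : qf (- A) v = - qf A v.
Proof. by rewrite /qf mulmxN mulNmx mxE. Qed.

Lemma psd_qf n (A : 'M[C]_n) v : psd A -> 0 <= qf A v.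
Proof. by move=> pA; apply pA.2. Qed.

Lemma qf_real n (A : 'M[C]_n) v : psd A -> qf A v \is Num.real.
Proof. by move=> pA; apply: ger0_real; apply pA.2. Qed.

Lemma sqrt_uniq n (S T : 'M[C]_n) : psd S -> psd T -> S *m S = T *m T -> S = T.
Proof.
move=> pS pT ST; set D := S - T.
have hD : adj D = D by rewrite /D adjD adjN pS.1 pT.1.
have eq0 : S *m D + D *m T = 0.
  by rewrite /D mulmxBr mulmxBl ST addrA subrK subrr.
have nD : D \is normalmx by apply/normalmxP; rewrite adjt hD.
have /orthomx_spectralP eD := nD.
set U := spectralmx D in eD; set l := spectral_diag D in eD.
have uU : U \is unitarymx by exact: spectral_unitarymx.
have [UU UU'] := unitary_adj uU.
have iU : invmx U = adj U by rewrite invmx_unitary // adjt.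
rewrite iU in eD.
have UD : U *m D = diag_mx l *m U by rewrite eD !mulmxA UU mul1mx.
suff l0 : l = 0.
  apply/eqP; rewrite -subr_eq0; apply/eqP; rewrite -/D eD.
  have -> : diag_mx l = 0 by apply/matrixP => i k; rewrite !mxE l0 mxE mul0rn.
  by rewrite mulmx0 mul0mx.
apply/rowP => j; rewrite mxE; set v := row j U.
have vD : v *m D = l 0 j *: v.
  by rewrite /v -row_mul UD; apply/rowP => k; rewrite mul_diag_mx !mxE.
have Dv : D *m adj v = (l 0 j)^* *: adj v by rewrite -{1}hD -adjM vD adjZ.
have vv : (v *m adj v) 0 0 = 1.
  by have := qf_row 1%:M U j; rewrite /qf !mulmx1 UU => ->; rewrite mxE eqxx.
have qD : qf D v = l 0 j by rewrite /qf vD -scalemxAl mxE vv mulr1.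
have lreal : l 0 j \is Num.real.
  by rewrite -qD /D qfD qfN realB ?qf_real.
have h0 : qf (S *m D + D *m T) v = 0 by rewrite eq0 /qf mulmx0 mul0mx mxE.
rewrite qfD /qf !mulmxA -(mulmxA (v *m S)) Dv -scalemxAr vD -!scalemxAl !scale00 in h0.
rewrite conj_Creal // -mulrDr in h0.
move/eqP: h0; rewrite mulf_eq0 => /orP [/eqP //|].
rewrite paddr_eq0; [|exact: (psd_qf v pS)|exact: (psd_qf v pT)] => /andP [/eqP hs /eqP ht].
have := qf_eq0 pS hs; have := qf_eq0 pT ht => vT vS.
have : v *m D = 0 by rewrite /D mulmxBr vS vT subrr.
rewrite vD => /(congr1 (fun X => (X *m adj v) 0 0)).
by rewrite -scalemxAl mxE vv mulr1 mul0mx mxE.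
Qed.

Lemma psd_sq n (S : 'M[C]_n) : psd S -> psd (S *m S).
Proof.
move=> pS; have := psd_congr S (psd1 n); by rewrite mulmx1 pS.1.
Qed.

Lemma sqrtmx_eq n (A S : 'M[C]_n) : psd S -> S *m S = A -> sqrtmx A = S.
Proof.
move=> pS SA; have pA : psd A by rewrite -SA; exact: psd_sq.
have [p1 p2] := sqrtmx_spec pA; apply: sqrt_uniq => //; by rewrite p2.
Qed.

Lemma sqrtmx_unit n (A : 'M[C]_n) : psd A -> A \in unitmx -> sqrtmx A \in unitmx.
Proof.
move=> pA uA; have [_ e] := sqrtmx_spec pA.
by move: uA; rewrite -{1}e unitmx_mul => /andP [].
Qed.

Lemma riccati n (A X Y : 'M[C]_n) : psd A -> A \in unitmx -> psd X -> psd Y ->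
  X *m A *m X = Y *m A *m Y -> X = Y.
Proof.
move=> pA uA pX pY XY.
have [pa aa] := sqrtmx_spec pA; have ua := sqrtmx_unit pA uA.
set a := sqrtmx A in pa aa ua.
have h : a *m X *m a = a *m Y *m a.
  apply: sqrt_uniq.
  - by have := psd_congr a pX; rewrite pa.1.
  - by have := psd_congr a pY; rewrite pa.1.
  have e : forall Z, a *m Z *m a *m (a *m Z *m a) = a *m (Z *m A *m Z) *m a.
    by move=> Z; rewrite -aa !mulmxA.
  by rewrite !e XY.
by rewrite -(mulKmx ua X) -(mulmxK ua (a *m X)) h mulmxK // mulKmx.
Qed.

Lemma posdef_psd n (A : 'M[C]_n) : posdefmx A -> psd A /\ A \in unitmx.
Proof.
move=> [hA pA]; have qA : forall v, v != 0 -> 0 < qf A v by [].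
split.
  split => // v; have [->|v0] := eqVneq v 0; last by apply/ltW/qA.
  by rewrite /qf !mul0mx mxE.
rewrite unitmxE unitfE; apply/negP => /det0P [v v0 vA].
by have := qA v v0; rewrite /qf vA mul0mx mxE ltxx.
Qed.


Lemma invmxM n (A B : 'M[C]_n) : A \in unitmx -> B \in unitmx ->
  invmx (A *m B) = invmx B *m invmx A.
Proof.
move=> uA uB; have uAB : A *m B \in unitmx by rewrite unitmx_mul uA uB.
have h : A *m B *m (invmx B *m invmx A) = 1%:M by rewrite mulmxA (mulmxK uB) (mulmxV uA).
by rewrite -[RHS]mul1mx -(mulVmx uAB) -mulmxA h mulmx1.
Qed.

Lemma trC n (A B : 'M[C]_n) : \tr (A *m B) = \tr (B *m A).
Proof. exact: mxtrace_mulC. Qed.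

Lemma core n (M P Q : 'M[C]_n) : psd M -> M \in unitmx -> psd P -> P \in unitmx ->
  psd Q -> Q \in unitmx ->
  genfid (invmx M *m P *m invmx M) P Q = genfid (invmx M *m Q *m invmx M) P Q.
Proof.
move=> pM uM pP uP pQ uQ.
have piM := psdV pM uM; have uiM : invmx M \in unitmx by rewrite unitmx_inv.
have aiM : adj (invmx M) = invmx M by exact: piM.1.
have congr_psd : forall (B A : 'M[C]_n), adj B = B -> psd A -> psd (B *m A *m B).
  by move=> B A hB pA; have := psd_congr B pA; rewrite hB.
set R1 := invmx M *m P *m invmx M; set R2 := invmx M *m Q *m invmx M.
have pR1 : psd R1 by apply: congr_psd.
have pR2 : psd R2 by apply: congr_psd.
have uR1 : R1 \in unitmx by rewrite !unitmx_mul uiM uP.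
have uR2 : R2 \in unitmx by rewrite !unitmx_mul uiM uQ.
have [ps1 s1s1] := sqrtmx_spec pR1; have us1 := sqrtmx_unit pR1 uR1.
have [ps2 s2s2] := sqrtmx_spec pR2; have us2 := sqrtmx_unit pR2 uR2.
rewrite /genfid -/R1 -/R2.
set s1 := sqrtmx R1 in ps1 s1s1 us1 *; set s2 := sqrtmx R2 in ps2 s2s2 us2 *.
have -> : sqrtmx (s1 *m P *m s1) = s1 *m M *m s1.
  apply: sqrtmx_eq; first by apply: congr_psd => //; exact: ps1.1.
  by rewrite !mulmxA -(mulmxA _ s1 s1) s1s1 /R1 !mulmxA mulmxKV // mulmxK.
have -> : sqrtmx (s2 *m Q *m s2) = s2 *m M *m s2.
  apply: sqrtmx_eq; first by apply: congr_psd => //; exact: ps2.1.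
  by rewrite !mulmxA -(mulmxA _ s2 s2) s2s2 /R2 !mulmxA mulmxKV // mulmxK.
have ais1 : adj (invmx s1) = invmx s1 by rewrite adjV ps1.1.
have ais2 : adj (invmx s2) = invmx s2 by rewrite adjV ps2.1.
have [pT1 T1T1] := sqrtmx_spec (congr_psd s1 Q ps1.1 pQ).
set T1 := sqrtmx (s1 *m Q *m s1) in pT1 T1T1 *.
have [pB2 B2B2] := sqrtmx_spec (congr_psd s2 P ps2.1 pP).
have uB2 : sqrtmx (s2 *m P *m s2) \in unitmx.
  by apply: sqrtmx_unit; [apply: congr_psd => //; exact: ps2.1| rewrite !unitmx_mul us2 uP].
set B2 := sqrtmx (s2 *m P *m s2) in pB2 B2B2 uB2 *.
set X2 := invmx s2 *m B2 *m invmx s2.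
have pX2 : psd X2 by apply: congr_psd.
have uX2 : X2 \in unitmx by rewrite !unitmx_mul unitmx_inv us2 uB2.
have X2R2X2 : X2 *m R2 *m X2 = P.
  rewrite /X2 -s2s2 !mulmxA mulmxKV // mulmxK // -(mulmxA _ B2 B2) B2B2 !mulmxA.
  by rewrite mulVmx // mul1mx mulmxK.
have hB2 : B2 = s2 *m X2 *m s2 by rewrite /X2 !mulmxA mulmxV // mul1mx mulmxKV.
clearbody X2.
set Y1 := invmx s1 *m T1 *m invmx s1.
set Z := M *m invmx X2 *m M.
have YZ : Y1 = Z.
  apply: (riccati pR1 uR1).
  - by apply: congr_psd.
  - by apply: congr_psd; [exact: pM.1 | exact: psdV].
  have -> : Y1 *m R1 *m Y1 = Q.
    rewrite /Y1 -s1s1 !mulmxA mulmxKV // mulmxK // -(mulmxA _ T1 T1) T1T1 !mulmxA.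
    by rewrite mulVmx // mul1mx mulmxK.
  rewrite /Z /R1 !mulmxA mulmxK // -X2R2X2 !mulmxA.
  by rewrite mulmxKV // (mulmxKV uX2) (mulmxK uX2) (mulmxKV uM) (mulmxV uM) mul1mx.
have hT1 : T1 = s1 *m Y1 *m s1 by rewrite /Y1 !mulmxA mulmxV // mul1mx mulmxKV.
rewrite hT1 YZ hB2 /Z.
have iR1 : invmx R1 = invmx s1 *m invmx s1 by rewrite -s1s1 invmxM.
have iR2 : invmx R2 = invmx s2 *m invmx s2 by rewrite -s2s2 invmxM.
rewrite iR1 iR2 !mulmxA mulmxK // mulmxKV // mulmxK // mulmxKV //.
rewrite [LHS]trC ?mulmxA s1s1 /R1 ?mulmxA (mulmxKV uM).
rewrite [LHS]trC ?mulmxA (mulmxV uM) mul1mx.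
rewrite [RHS]trC ?mulmxA s2s2 -X2R2X2 [LHS]trC ?mulmxA (mulVmx uX2) mul1mx.
by rewrite /R2.
Qed.
Lemma gmean_prop n (P Q : 'M[C]_n) : psd P -> P \in unitmx -> psd Q -> Q \in unitmx ->
  [/\ psd (gmeanmx P Q), gmeanmx P Q \in unitmx &
      gmeanmx P Q *m invmx P *m gmeanmx P Q = Q].
Proof.
move=> pP uP pQ uQ; rewrite /gmeanmx.
have [psP sPsP] := sqrtmx_spec pP; have usP := sqrtmx_unit pP uP.
set sP := sqrtmx P in psP sPsP usP *.
have aisP : adj (invmx sP) = invmx sP by rewrite adjV psP.1.
have pK0 : psd (invmx sP *m Q *m invmx sP).
  by have := psd_congr (invmx sP) pQ; rewrite aisP.
have uK0 : invmx sP *m Q *m invmx sP \in unitmx by rewrite !unitmx_mul unitmx_inv usP uQ.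
have [pK KK] := sqrtmx_spec pK0; have uK := sqrtmx_unit pK0 uK0.
set K := sqrtmx _ in pK KK uK *.
split.
- by have := psd_congr sP pK; rewrite psP.1.
- by rewrite !unitmx_mul usP uK.
rewrite -sPsP invmxM // !mulmxA (mulmxK usP) (mulmxKV usP) -(mulmxA _ K K) KK.
by rewrite !mulmxA (mulmxV usP) mul1mx (mulmxKV usP).
Qed.

Lemma main_gen n (P Q : 'M[C]_n) (t : C) : posdefmx P -> posdefmx Q -> 0 <= t <= 1 ->
  genfid (invmx (gammaBW (invmx P) Q t)) P Q = genfid (invmx (gammaBW (invmx Q) P t)) P Q.
Proof.
move=> /posdef_psd [pP uP] /posdef_psd [pQ uQ] /andP [t0 t1].
have [pG uG GPG] := gmean_prop pP uP pQ uQ.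
have [pG' uG' GQG'] := gmean_prop pQ uQ pP uP.
set G := gmeanmx P Q in pG uG GPG *.
have eGd : gmeanmx P Q = G by [].
clearbody G.
have GQG : G *m invmx Q *m G = P.
  have uGP : G *m invmx P \in unitmx by rewrite unitmx_mul uG unitmx_inv.
  rewrite -GPG (invmxM uGP uG) (invmxM uG) ?unitmx_inv // invmxK !mulmxA.
  by rewrite (mulmxV uG) mul1mx (mulmxKV uG).
have eG : gmeanmx Q P = G.
  apply: (riccati (psdV pQ uQ)); rewrite ?unitmx_inv //.
  by rewrite GQG GQG'.
rewrite /gammaBW !invmxK eG eGd.
set M := (1 - t)%:M + t *: G.
have pM : psd M.
  apply: psdD; last by apply: psdZ.
  by rewrite -scalemx1; apply: psdZ; rewrite ?subr_ge0 //; exact: psd1.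
have uM : M \in unitmx.
  rewrite unitmxE unitfE; apply/negP => /det0P [v v0 vM].
  have : qf M v = 0 by rewrite /qf vM mul0mx mxE.
  rewrite qfD -scalemx1 qfZ qfZ => h.
  have q1 : 0 <= qf 1%:M v by apply: psd_qf; exact: psd1.
  have qG : 0 <= qf G v by apply: psd_qf.
  move/eqP: h; rewrite paddr_eq0 ?mulr_ge0 ?subr_ge0 // => /andP [/eqP h1 /eqP h2].
  have [t1'|t1'] := eqVneq t 1.
    rewrite t1' mul1r in h2; have vG := qf_eq0 pG h2.
    by move: v0; rewrite -(mulmxK uG v) vG mul0mx eqxx.
  have : qf 1%:M v = 0.
    by move/eqP: h1; rewrite mulf_eq0 subr_eq0 eq_sym (negbTE t1') => /eqP.
  by rewrite /qf mulmx1 => /dot_eq0 v0'; rewrite v0' eqxx in v0.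
rewrite !invmxM ?unitmx_mul ?unitmx_inv ?uM ?uP ?uQ // !invmxK !mulmxA.
by apply: core.
Qed.
End G.

Local Open Scope complex_scope.

Theorem mainTheorem7 (R : realType) (d : nat) (P Q : 'M[R[i]]_d) (t : R) :
  posdefmx P -> posdefmx Q -> (0 <= t <= 1)%R ->
  let R1 := invmx (gammaBW (invmx P) Q t%:C) in
  let R2 := invmx (gammaBW (invmx Q) P t%:C) in
  genfid R1 P Q = genfid R2 P Q.
Proof.
move=> hP hQ /andP [t0 t1] R1 R2; rewrite /R1 /R2; apply: main_gen => //.
by rewrite -[0]/(0%:C) -[1]/(1%:C) !lecR t0 t1.
Qed.
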